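(* Let $x_\circ$ be the unique solution of $\Psi_{6.74}(x)=x$ in $[\frac38,\frac12]$. Then $\Phi_3(6.74,x_\circ)>0$.
   Context: $\Psi_d=\dot\Psi\circ\hat\Psi$ with $\hat\Psi(x)=\frac{1-2x^{2}}{1-x^{2}}$, $\dot\Psi(v)=\frac{1-v^{d-1}}{2-v^{d-1}}$; $\Phi_3(d,x)=-\log(1-x)-d(\frac23-d^{-1})\log(1-2x^3)+(d-1)\log(1-x^{2})$. (Existence and uniqueness of $x_\circ$ is known.) *)

(* Defs.v *)
From Stdlib Require Import Reals.
Open Scope R_scope.

Definition hatPsi (x : R) : R := (1 - 2 * x ^ 2) / (1 - x ^ 2).

Definition dotPsi (d v : R) : R :=
  (1 - Rpower v (d - 1)) / (2 - Rpower v (d - 1)).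

Definition Psi (d x : R) : R := dotPsi d (hatPsi x).

Definition Phi3 (d x : R) : R :=
  - ln (1 - x) - d * (2 / 3 - / d) * ln (1 - 2 * x ^ 3)
  + (d - 1) * ln (1 - x ^ 2).

Definition d0 : R := 674 / 100.

(* Main.v *)
Require Import Defs.
From Stdlib Require Import Reals.
From Stdlib Require Import Lra Psatz ZArith.
From Coquelicot Require Import Coquelicot.
Open Scope R_scope.

Lemma ln_le' x y : 0 < x -> x <= y -> ln x <= ln y.
Proof.
  intros Hx Hxy. destruct (Rle_lt_or_eq _ _ Hxy) as [H|H].
  - left; now apply ln_increasing.
  - subst; lra.
Qed.

Lemma lncmp (X Y Z : R) k1 k2 k3 : 0 < X -> 0 < Y -> 0 < Z ->
  X ^ k1 * Y ^ k2 < Z ^ k3 ->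
  INR k1 * ln X + INR k2 * ln Y < INR k3 * ln Z.
Proof.
  intros HX HY HZ H.
  rewrite <- !ln_pow by assumption.
  rewrite <- ln_mult by (apply pow_lt; assumption).
  apply ln_increasing; [|assumption].
  apply Rmult_lt_0_compat; apply pow_lt; assumption.
Qed.

Lemma ratcmp (a b c d e f : Z) k1 k2 k3 :
  (0 < b)%Z -> (0 < d)%Z -> (0 < f)%Z ->
  (a ^ Z.of_nat k1 * c ^ Z.of_nat k2 * f ^ Z.of_nat k3
     < e ^ Z.of_nat k3 * b ^ Z.of_nat k1 * d ^ Z.of_nat k2)%Z ->
  (IZR a / IZR b) ^ k1 * (IZR c / IZR d) ^ k2 < (IZR e / IZR f) ^ k3.
Proof.
  intros Hb Hd Hf H.
  unfold Rdiv. rewrite !Rpow_mult_distr, !pow_inv, !pow_IZR.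
  apply IZR_lt in H. rewrite !mult_IZR in H.
  assert (0 < IZR (b ^ Z.of_nat k1)) by (apply IZR_lt; apply Z.pow_pos_nonneg; lia).
  assert (0 < IZR (d ^ Z.of_nat k2)) by (apply IZR_lt; apply Z.pow_pos_nonneg; lia).
  assert (0 < IZR (f ^ Z.of_nat k3)) by (apply IZR_lt; apply Z.pow_pos_nonneg; lia).
  set (A := IZR (a ^ Z.of_nat k1)) in *.
  set (B := IZR (b ^ Z.of_nat k1)) in *.
  set (C := IZR (c ^ Z.of_nat k2)) in *.
  set (D := IZR (d ^ Z.of_nat k2)) in *.
  set (E := IZR (e ^ Z.of_nat k3)) in *.
  set (F := IZR (f ^ Z.of_nat k3)) in *.
  apply (Rmult_lt_reg_r (B * D * F)); [apply Rmult_lt_0_compat; [apply Rmult_lt_0_compat|];assumption|].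
  replace (A * / B * (C * / D) * (B * D * F)) with (A * C * F) by (field; lra).
  replace (E * / F * (B * D * F)) with (E * B * D) by (field; lra).
  exact H.
Qed.

Definition H (y : R) : R :=
  287 / 50 * ln ((1 - 2 * y ^ 2) / (1 - y ^ 2)) - ln (1 - 2 * y) + ln (1 - y).

Definition Ph (y : R) : R :=
  - ln (1 - y) - 262 / 75 * ln (1 - 2 * y ^ 3) + 287 / 50 * ln (1 - y ^ 2).

Lemma Hd_pos z : 399/1000 < z -> z < 45/100 ->
  1 / ((1 - 2 * z) * (1 - z)) - 287 / 25 * z / ((1 - 2 * z ^ 2) * (1 - z ^ 2)) > 0.
Proof.
    intros H1 H2.
    assert (0 < 1 - 2 * z) by lra. assert (0 < 1 - z) by lra.
    assert (0 < 1 - 2 * z ^ 2) by nra. assert (0 < 1 - z ^ 2) by nra.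
    assert (K : 287 / 25 * z * ((1 - 2 * z) * (1 - z)) < (1 - 2 * z ^ 2) * (1 - z ^ 2)).
    { nra. }
    apply Rgt_minus.
    apply (Rmult_lt_reg_r (((1 - 2 * z) * (1 - z)) * ((1 - 2 * z ^ 2) * (1 - z ^ 2)))).
    { apply Rmult_lt_0_compat; apply Rmult_lt_0_compat; assumption. }
    replace (287 / 25 * z / ((1 - 2 * z ^ 2) * (1 - z ^ 2)) *
       ((1 - 2 * z) * (1 - z) * ((1 - 2 * z ^ 2) * (1 - z ^ 2))))
      with (287 / 25 * z * ((1 - 2 * z) * (1 - z))) by (field; lra).
    replace (1 / ((1 - 2 * z) * (1 - z)) *
       ((1 - 2 * z) * (1 - z) * ((1 - 2 * z ^ 2) * (1 - z ^ 2))))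
      with ((1 - 2 * z ^ 2) * (1 - z ^ 2)) by (field; lra).
    exact K.
Qed.

Lemma H_incr : forall x y, 399/1000 < x -> x < y -> y < 45/100 -> H x < H y.
Proof.
  intros x y Hx Hxy Hy.
  apply (incr_function H (Finite (399/1000)) (Finite (45/100))
    (fun y => 1 / ((1 - 2 * y) * (1 - y)) - 287 / 25 * y / ((1 - 2 * y ^ 2) * (1 - y ^ 2))));
    simpl; try lra.
  - intros z H1 H2. unfold H. auto_derive.
    + repeat split; try lra; try nra.
      apply Rdiv_lt_0_compat; nra.
    + field. repeat split; nra.
  - intros z H1 H2. apply Hd_pos; lra.
Qed.

Lemma Pd_pos z : 44/100 < z -> z < 1/2 ->
  1 / (1 - z) + 262 / 75 * (6 * z ^ 2) / (1 - 2 * z ^ 3) - 287 / 25 * z / (1 - z ^ 2) > 0.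
Proof.
  intros H1 H2.
  assert (0 < 1 - z) by lra. assert (0 < 1 + z) by lra.
  assert (0 < 1 - 2 * z ^ 3) by nra. assert (0 < 1 - z ^ 2) by nra.
  assert (K : 0 < (1 + z) * (1 - 2 * z ^ 3) + 524 / 25 * z ^ 2 * (1 - z ^ 2)
                 - 287 / 25 * z * (1 - 2 * z ^ 3)) by nra.
  apply (Rmult_lt_reg_r ((1 - z ^ 2) * (1 - 2 * z ^ 3))).
  { apply Rmult_lt_0_compat; assumption. }
  rewrite Rmult_0_l.
  replace ((1 / (1 - z) + 262 / 75 * (6 * z ^ 2) / (1 - 2 * z ^ 3) - 287 / 25 * z / (1 - z ^ 2)) *
    ((1 - z ^ 2) * (1 - 2 * z ^ 3))) with
   ((1 + z) * (1 - 2 * z ^ 3) + 524 / 25 * z ^ 2 * (1 - z ^ 2)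
                 - 287 / 25 * z * (1 - 2 * z ^ 3)) by (field; split; nra).
  exact K.
Qed.

Lemma Ph_incr : forall x y, 44/100 < x -> x < y -> y < 1/2 -> Ph x < Ph y.
Proof.
  intros x y Hx Hxy Hy.
  apply (incr_function Ph (Finite (44/100)) (Finite (1/2))
    (fun y => 1 / (1 - y) + 262 / 75 * (6 * y ^ 2) / (1 - 2 * y ^ 3) - 287 / 25 * y / (1 - y ^ 2)));
    simpl; try lra.
  - intros z H1 H2. unfold Ph. auto_derive.
    + repeat split; try lra; try nra.
    + field. repeat split; nra.
  - intros z H1 H2. apply Pd_pos; lra.
Qed.

Lemma Hneg (V A B : R) : 0 < V -> 0 < A -> 0 < B -> V ^ 287 * A ^ 50 < B ^ 50 ->
  287 / 50 * ln V - ln B + ln A < 0.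
Proof.
  intros HV HA HB K.
  pose proof (lncmp V A B 287 50 50 HV HA HB K) as L.
  rewrite !INR_IZR_INZ in L. simpl in L. lra.
Qed.

Lemma Ppos (X Y Z : R) : 0 < X -> 0 < Y -> 0 < Z -> X ^ 150 * Y ^ 524 < Z ^ 861 ->
  - ln X - 262 / 75 * ln Y + 287 / 50 * ln Z > 0.
Proof.
  intros HV HA HB K.
  pose proof (lncmp X Y Z 150 524 861 HV HA HB K) as L.
  rewrite !INR_IZR_INZ in L. simpl in L. lra.
Qed.

Lemma chain_up (x : R) (a b : nat) {n : nat} {p q : R} (r : R) : 0 <= x -> n = (a + b)%nat ->
  x ^ a <= p -> x ^ b <= q -> p * q <= r -> x ^ n <= r.
Proof.
  intros Hx E Ha Hb Hr. subst n. rewrite pow_add.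
  apply Rle_trans with (p * q); [|exact Hr].
  apply Rmult_le_compat; try apply pow_le; assumption.
Qed.

Lemma chain_lo (x : R) (a b : nat) {n : nat} {p q : R} (r : R) : n = (a + b)%nat ->
  p <= x ^ a -> q <= x ^ b -> 0 <= p -> 0 <= q -> r <= p * q -> r <= x ^ n.
Proof.
  intros E Ha Hb Hp Hq Hr. subst n. rewrite pow_add.
  apply Rle_trans with (p * q); [exact Hr|].
  apply Rmult_le_compat; assumption.
Qed.

Lemma fin_cmp (X Y Z a b c : R) {n m k : nat} :
  X ^ n <= a -> Y ^ m <= b -> c <= Z ^ k -> 0 <= X -> 0 <= Y -> 0 <= a -> a * b < c ->
  X ^ n * Y ^ m < Z ^ k.
Proof.
  intros HX HY HZ H1 H2 H3 H4.
  apply Rle_lt_trans with (a * b); [|lra].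
  apply Rmult_le_compat; try apply pow_le; assumption.
Qed.

Lemma num1 : (46/55) ^ 287 * (5/8) ^ 50 < (23/100) ^ 50.
Proof.
  assert (HX1 : (46/55) ^ 1 <= (46/55)) by (rewrite pow_1; lra).
  assert (HX2 : (46/55) ^ 2 <= (699504132231404958677685950414 / 1000000000000000000000000000000)) by (eapply (chain_up _ 1 1); [lra|reflexivity|exact HX1|exact HX1|lra]).
  assert (HX4 : (46/55) ^ 4 <= (489306031008810873574209411927 / 1000000000000000000000000000000)) by (eapply (chain_up _ 2 2); [lra|reflexivity|exact HX2|exact HX2|lra]).
  assert (HX8 : (46/55) ^ 8 <= (239420391981595388156556014119 / 1000000000000000000000000000000)) by (eapply (chain_up _ 4 4); [lra|reflexivity|exact HX4|exact HX4|lra]).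
  assert (HX16 : (46/55) ^ 16 <= (573221240966207852360083262778 / 10000000000000000000000000000000)) by (eapply (chain_up _ 8 8); [lra|reflexivity|exact HX8|exact HX8|lra]).
  assert (HX17 : (46/55) ^ 17 <= (479421401535373840155706001597 / 10000000000000000000000000000000)) by (eapply (chain_up _ 16 1); [lra|reflexivity|exact HX16|exact HX1|lra]).
  assert (HX34 : (46/55) ^ 34 <= (229844880250142154299022407583 / 100000000000000000000000000000000)) by (eapply (chain_up _ 17 17); [lra|reflexivity|exact HX17|exact HX17|lra]).
  assert (HX35 : (46/55) ^ 35 <= (192233899845573438141000559070 / 100000000000000000000000000000000)) by (eapply (chain_up _ 34 1); [lra|reflexivity|exact HX34|exact HX1|lra]).
  assert (HX70 : (46/55) ^ 70 <= (369538722498379595243541377521 / 100000000000000000000000000000000000)) by (eapply (chain_up _ 35 35); [lra|reflexivity|exact HX35|exact HX35|lra]).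
  assert (HX71 : (46/55) ^ 71 <= (309068749725917479658234606654 / 100000000000000000000000000000000000)) by (eapply (chain_up _ 70 1); [lra|reflexivity|exact HX70|exact HX1|lra]).
  assert (HX142 : (46/55) ^ 142 <= (955234920571418161573632221275 / 100000000000000000000000000000000000000000)) by (eapply (chain_up _ 71 71); [lra|reflexivity|exact HX71|exact HX71|lra]).
  assert (HX143 : (46/55) ^ 143 <= (798923751750640644225219675976 / 100000000000000000000000000000000000000000)) by (eapply (chain_up _ 142 1); [lra|reflexivity|exact HX142|exact HX1|lra]).
  assert (HX286 : (46/55) ^ 286 <= (638279161111319279838399361423 / 10000000000000000000000000000000000000000000000000000)) by (eapply (chain_up _ 143 143); [lra|reflexivity|exact HX143|exact HX143|lra]).
  assert (HX287 : (46/55) ^ 287 <= (533833480202194306773934011372 / 10000000000000000000000000000000000000000000000000000)) by (eapply (chain_up _ 286 1); [lra|reflexivity|exact HX286|exact HX1|lra]).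
  assert (HY1 : (5/8) ^ 1 <= (5/8)) by (rewrite pow_1; lra).
  assert (HY2 : (5/8) ^ 2 <= (390625000000000000000000000000 / 1000000000000000000000000000000)) by (eapply (chain_up _ 1 1); [lra|reflexivity|exact HY1|exact HY1|lra]).
  assert (HY3 : (5/8) ^ 3 <= (244140625000000000000000000000 / 1000000000000000000000000000000)) by (eapply (chain_up _ 2 1); [lra|reflexivity|exact HY2|exact HY1|lra]).
  assert (HY6 : (5/8) ^ 6 <= (596046447753906250000000000000 / 10000000000000000000000000000000)) by (eapply (chain_up _ 3 3); [lra|reflexivity|exact HY3|exact HY3|lra]).
  assert (HY12 : (5/8) ^ 12 <= (355271367880050092935562133790 / 100000000000000000000000000000000)) by (eapply (chain_up _ 6 6); [lra|reflexivity|exact HY6|exact HY6|lra]).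
  assert (HY24 : (5/8) ^ 24 <= (126217744835361888865876570446 / 10000000000000000000000000000000000)) by (eapply (chain_up _ 12 12); [lra|reflexivity|exact HY12|exact HY12|lra]).
  assert (HY25 : (5/8) ^ 25 <= (788860905221011805411728565288 / 100000000000000000000000000000000000)) by (eapply (chain_up _ 24 1); [lra|reflexivity|exact HY24|exact HY1|lra]).
  assert (HY50 : (5/8) ^ 50 <= (622301527786114170714406405387 / 10000000000000000000000000000000000000000)) by (eapply (chain_up _ 25 25); [lra|reflexivity|exact HY25|exact HY25|lra]).
  assert (HZ1 : (23/100) <= (23/100) ^ 1) by (rewrite pow_1; lra).
  assert (HZ2 : (529000000000000000000000000000 / 10000000000000000000000000000000) <= (23/100) ^ 2) by (eapply (chain_lo _ 1 1); [reflexivity|exact HZ1|exact HZ1|lra|lra|lra]).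
  assert (HZ3 : (121670000000000000000000000000 / 10000000000000000000000000000000) <= (23/100) ^ 3) by (eapply (chain_lo _ 2 1); [reflexivity|exact HZ2|exact HZ1|lra|lra|lra]).
  assert (HZ6 : (148035889000000000000000000000 / 1000000000000000000000000000000000) <= (23/100) ^ 6) by (eapply (chain_lo _ 3 3); [reflexivity|exact HZ3|exact HZ3|lra|lra|lra]).
  assert (HZ12 : (219146244320203210000000000000 / 10000000000000000000000000000000000000) <= (23/100) ^ 12) by (eapply (chain_lo _ 6 6); [reflexivity|exact HZ6|exact HZ6|lra|lra|lra]).
  assert (HZ24 : (480250763996501976790165756943 / 1000000000000000000000000000000000000000000000) <= (23/100) ^ 24) by (eapply (chain_lo _ 12 12); [reflexivity|exact HZ12|exact HZ12|lra|lra|lra]).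
  assert (HZ25 : (110457675719195454661738124096 / 1000000000000000000000000000000000000000000000) <= (23/100) ^ 25) by (eapply (chain_lo _ 24 1); [reflexivity|exact HZ24|exact HZ1|lra|lra|lra]).
  assert (HZ50 : (122008981252869411022491112991 / 10000000000000000000000000000000000000000000000000000000000000) <= (23/100) ^ 50) by (eapply (chain_lo _ 25 25); [reflexivity|exact HZ25|exact HZ25|lra|lra|lra]).
  apply (fin_cmp _ _ _ _ _ _ HX287 HY50 HZ50); [lra|lra|lra|lra]. 
Qed.
Lemma num2 : (28142/34071) ^ 287 * (123/200) ^ 50 < (21/100) ^ 50.
Proof.
  assert (HX1 : (28142/34071) ^ 1 <= (28142/34071)) by (rewrite pow_1; lra).
  assert (HX2 : (28142/34071) ^ 2 <= (682244677768437158052946909529 / 1000000000000000000000000000000)) by (eapply (chain_up _ 1 1); [lra|reflexivity|exact HX1|exact HX1|lra]).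
  assert (HX4 : (28142/34071) ^ 4 <= (465457800343358650971757092257 / 1000000000000000000000000000000)) by (eapply (chain_up _ 2 2); [lra|reflexivity|exact HX2|exact HX2|lra]).
  assert (HX8 : (28142/34071) ^ 8 <= (216650963900477924702458999790 / 1000000000000000000000000000000)) by (eapply (chain_up _ 4 4); [lra|reflexivity|exact HX4|exact HX4|lra]).
  assert (HX16 : (28142/34071) ^ 16 <= (469376401590061889049189544215 / 10000000000000000000000000000000)) by (eapply (chain_up _ 8 8); [lra|reflexivity|exact HX8|exact HX8|lra]).
  assert (HX17 : (28142/34071) ^ 17 <= (387696008146151321699459720974 / 10000000000000000000000000000000)) by (eapply (chain_up _ 16 1); [lra|reflexivity|exact HX16|exact HX1|lra]).
  assert (HX34 : (28142/34071) ^ 34 <= (150308194732460631994968827992 / 100000000000000000000000000000000)) by (eapply (chain_up _ 17 17); [lra|reflexivity|exact HX17|exact HX17|lra]).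
  assert (HX35 : (28142/34071) ^ 35 <= (124151718944583578574224788159 / 100000000000000000000000000000000)) by (eapply (chain_up _ 34 1); [lra|reflexivity|exact HX34|exact HX1|lra]).
  assert (HX70 : (28142/34071) ^ 70 <= (154136493168948730413941328484 / 100000000000000000000000000000000000)) by (eapply (chain_up _ 35 35); [lra|reflexivity|exact HX35|exact HX35|lra]).
  assert (HX71 : (28142/34071) ^ 71 <= (127313820867029296801066504247 / 100000000000000000000000000000000000)) by (eapply (chain_up _ 70 1); [lra|reflexivity|exact HX70|exact HX1|lra]).
  assert (HX142 : (28142/34071) ^ 142 <= (162088089837620244070549149709 / 100000000000000000000000000000000000000000)) by (eapply (chain_up _ 71 71); [lra|reflexivity|exact HX71|exact HX71|lra]).
  assert (HX143 : (28142/34071) ^ 143 <= (133881688949849106531460602011 / 100000000000000000000000000000000000000000)) by (eapply (chain_up _ 142 1); [lra|reflexivity|exact HX142|exact HX1|lra]).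
  assert (HX286 : (28142/34071) ^ 286 <= (179243066360641483576608661841 / 100000000000000000000000000000000000000000000000000000)) by (eapply (chain_up _ 143 143); [lra|reflexivity|exact HX143|exact HX143|lra]).
  assert (HX287 : (28142/34071) ^ 287 <= (148051374292541241255405505020 / 100000000000000000000000000000000000000000000000000000)) by (eapply (chain_up _ 286 1); [lra|reflexivity|exact HX286|exact HX1|lra]).
  assert (HY1 : (123/200) ^ 1 <= (123/200)) by (rewrite pow_1; lra).
  assert (HY2 : (123/200) ^ 2 <= (378225000000000000000000000000 / 1000000000000000000000000000000)) by (eapply (chain_up _ 1 1); [lra|reflexivity|exact HY1|exact HY1|lra]).
  assert (HY3 : (123/200) ^ 3 <= (232608375000000000000000000000 / 1000000000000000000000000000000)) by (eapply (chain_up _ 2 1); [lra|reflexivity|exact HY2|exact HY1|lra]).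
  assert (HY6 : (123/200) ^ 6 <= (541066561201406250000000000000 / 10000000000000000000000000000000)) by (eapply (chain_up _ 3 3); [lra|reflexivity|exact HY3|exact HY3|lra]).
  assert (HY12 : (123/200) ^ 12 <= (292753023650315095143376977540 / 100000000000000000000000000000000)) by (eapply (chain_up _ 6 6); [lra|reflexivity|exact HY6|exact HY6|lra]).
  assert (HY24 : (123/200) ^ 24 <= (857043328564019494344221801783 / 100000000000000000000000000000000000)) by (eapply (chain_up _ 12 12); [lra|reflexivity|exact HY12|exact HY12|lra]).
  assert (HY25 : (123/200) ^ 25 <= (527081647066871989021696408097 / 100000000000000000000000000000000000)) by (eapply (chain_up _ 24 1); [lra|reflexivity|exact HY24|exact HY1|lra]).
  assert (HY50 : (123/200) ^ 50 <= (277815062674726605227915185944 / 10000000000000000000000000000000000000000)) by (eapply (chain_up _ 25 25); [lra|reflexivity|exact HY25|exact HY25|lra]).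
  assert (HZ1 : (21/100) <= (21/100) ^ 1) by (rewrite pow_1; lra).
  assert (HZ2 : (441000000000000000000000000000 / 10000000000000000000000000000000) <= (21/100) ^ 2) by (eapply (chain_lo _ 1 1); [reflexivity|exact HZ1|exact HZ1|lra|lra|lra]).
  assert (HZ3 : (926100000000000000000000000000 / 100000000000000000000000000000000) <= (21/100) ^ 3) by (eapply (chain_lo _ 2 1); [reflexivity|exact HZ2|exact HZ1|lra|lra|lra]).
  assert (HZ6 : (857661210000000000000000000000 / 10000000000000000000000000000000000) <= (21/100) ^ 6) by (eapply (chain_lo _ 3 3); [reflexivity|exact HZ3|exact HZ3|lra|lra|lra]).
  assert (HZ12 : (735582751138664100000000000000 / 100000000000000000000000000000000000000) <= (21/100) ^ 12) by (eapply (chain_lo _ 6 6); [reflexivity|exact HZ6|exact HZ6|lra|lra|lra]).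
  assert (HZ24 : (541081983772725841305105932628 / 10000000000000000000000000000000000000000000000) <= (21/100) ^ 24) by (eapply (chain_lo _ 12 12); [reflexivity|exact HZ12|exact HZ12|lra|lra|lra]).
  assert (HZ25 : (113627216592272426674072245851 / 10000000000000000000000000000000000000000000000) <= (21/100) ^ 25) by (eapply (chain_lo _ 24 1); [reflexivity|exact HZ24|exact HZ1|lra|lra|lra]).
  assert (HZ50 : (129111443505071902638645647562 / 1000000000000000000000000000000000000000000000000000000000000000) <= (21/100) ^ 50) by (eapply (chain_lo _ 25 25); [reflexivity|exact HZ25|exact HZ25|lra|lra|lra]).
  apply (fin_cmp _ _ _ _ _ _ HX287 HY50 HZ50); [lra|lra|lra|lra]. 
Qed.
Lemma num3 : (27518/33759) ^ 287 * (121/200) ^ 50 < (1/5) ^ 50.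
Proof.
  assert (HX1 : (27518/33759) ^ 1 <= (27518/33759)) by (rewrite pow_1; lra).
  assert (HX2 : (27518/33759) ^ 2 <= (664438188405860239477498400698 / 1000000000000000000000000000000)) by (eapply (chain_up _ 1 1); [lra|reflexivity|exact HX1|exact HX1|lra]).
  assert (HX4 : (27518/33759) ^ 4 <= (441478106212061428364072742255 / 1000000000000000000000000000000)) by (eapply (chain_up _ 2 2); [lra|reflexivity|exact HX2|exact HX2|lra]).
  assert (HX8 : (27518/33759) ^ 8 <= (194902918264588191544621074794 / 1000000000000000000000000000000)) by (eapply (chain_up _ 4 4); [lra|reflexivity|exact HX4|exact HX4|lra]).
  assert (HX16 : (27518/33759) ^ 16 <= (379871475480527452707860604682 / 10000000000000000000000000000000)) by (eapply (chain_up _ 8 8); [lra|reflexivity|exact HX8|exact HX8|lra]).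
  assert (HX17 : (27518/33759) ^ 17 <= (309644932085463267383954149106 / 10000000000000000000000000000000)) by (eapply (chain_up _ 16 1); [lra|reflexivity|exact HX16|exact HX1|lra]).
  assert (HX34 : (27518/33759) ^ 34 <= (958799839662111592425085708541 / 1000000000000000000000000000000000)) by (eapply (chain_up _ 17 17); [lra|reflexivity|exact HX17|exact HX17|lra]).
  assert (HX35 : (27518/33759) ^ 35 <= (781547261110281311660698140574 / 1000000000000000000000000000000000)) by (eapply (chain_up _ 34 1); [lra|reflexivity|exact HX34|exact HX1|lra]).
  assert (HX70 : (27518/33759) ^ 70 <= (610816121348982235147973953929 / 1000000000000000000000000000000000000)) by (eapply (chain_up _ 35 35); [lra|reflexivity|exact HX35|exact HX35|lra]).
  assert (HX71 : (27518/33759) ^ 71 <= (497895021395221811866522920236 / 1000000000000000000000000000000000000)) by (eapply (chain_up _ 70 1); [lra|reflexivity|exact HX70|exact HX1|lra]).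
  assert (HX142 : (27518/33759) ^ 142 <= (247899452330148385794081237711 / 1000000000000000000000000000000000000000000)) by (eapply (chain_up _ 71 71); [lra|reflexivity|exact HX71|exact HX71|lra]).
  assert (HX143 : (27518/33759) ^ 143 <= (202070473924613385475918347681 / 1000000000000000000000000000000000000000000)) by (eapply (chain_up _ 142 1); [lra|reflexivity|exact HX142|exact HX1|lra]).
  assert (HX286 : (27518/33759) ^ 286 <= (408324764321178581454102138518 / 10000000000000000000000000000000000000000000000000000000)) by (eapply (chain_up _ 143 143); [lra|reflexivity|exact HX143|exact HX143|lra]).
  assert (HX287 : (27518/33759) ^ 287 <= (332838083610005989645842076121 / 10000000000000000000000000000000000000000000000000000000)) by (eapply (chain_up _ 286 1); [lra|reflexivity|exact HX286|exact HX1|lra]).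
  assert (HY1 : (121/200) ^ 1 <= (121/200)) by (rewrite pow_1; lra).
  assert (HY2 : (121/200) ^ 2 <= (366025000000000000000000000000 / 1000000000000000000000000000000)) by (eapply (chain_up _ 1 1); [lra|reflexivity|exact HY1|exact HY1|lra]).
  assert (HY3 : (121/200) ^ 3 <= (221445125000000000000000000000 / 1000000000000000000000000000000)) by (eapply (chain_up _ 2 1); [lra|reflexivity|exact HY2|exact HY1|lra]).
  assert (HY6 : (121/200) ^ 6 <= (490379433862656250000000000000 / 10000000000000000000000000000000)) by (eapply (chain_up _ 3 3); [lra|reflexivity|exact HY3|exact HY3|lra]).
  assert (HY12 : (121/200) ^ 12 <= (240471989155459255241988305665 / 100000000000000000000000000000000)) by (eapply (chain_up _ 6 6); [lra|reflexivity|exact HY6|exact HY6|lra]).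
  assert (HY24 : (121/200) ^ 24 <= (578267775683833136571667883964 / 100000000000000000000000000000000000)) by (eapply (chain_up _ 12 12); [lra|reflexivity|exact HY12|exact HY12|lra]).
  assert (HY25 : (121/200) ^ 25 <= (349852004288719047625859069799 / 100000000000000000000000000000000000)) by (eapply (chain_up _ 24 1); [lra|reflexivity|exact HY24|exact HY1|lra]).
  assert (HY50 : (121/200) ^ 50 <= (122396424904833890893115164044 / 10000000000000000000000000000000000000000)) by (eapply (chain_up _ 25 25); [lra|reflexivity|exact HY25|exact HY25|lra]).
  assert (HZ1 : (1/5) <= (1/5) ^ 1) by (rewrite pow_1; lra).
  assert (HZ2 : (400000000000000000000000000000 / 10000000000000000000000000000000) <= (1/5) ^ 2) by (eapply (chain_lo _ 1 1); [reflexivity|exact HZ1|exact HZ1|lra|lra|lra]).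
  assert (HZ3 : (800000000000000000000000000000 / 100000000000000000000000000000000) <= (1/5) ^ 3) by (eapply (chain_lo _ 2 1); [reflexivity|exact HZ2|exact HZ1|lra|lra|lra]).
  assert (HZ6 : (640000000000000000000000000000 / 10000000000000000000000000000000000) <= (1/5) ^ 6) by (eapply (chain_lo _ 3 3); [reflexivity|exact HZ3|exact HZ3|lra|lra|lra]).
  assert (HZ12 : (409600000000000000000000000000 / 100000000000000000000000000000000000000) <= (1/5) ^ 12) by (eapply (chain_lo _ 6 6); [reflexivity|exact HZ6|exact HZ6|lra|lra|lra]).
  assert (HZ24 : (167772160000000000000000000000 / 10000000000000000000000000000000000000000000000) <= (1/5) ^ 24) by (eapply (chain_lo _ 12 12); [reflexivity|exact HZ12|exact HZ12|lra|lra|lra]).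
  assert (HZ25 : (335544320000000000000000000000 / 100000000000000000000000000000000000000000000000) <= (1/5) ^ 25) by (eapply (chain_lo _ 24 1); [reflexivity|exact HZ24|exact HZ1|lra|lra|lra]).
  assert (HZ50 : (112589990684262400000000000000 / 10000000000000000000000000000000000000000000000000000000000000000) <= (1/5) ^ 50) by (eapply (chain_lo _ 25 25); [reflexivity|exact HZ25|exact HZ25|lra|lra|lra]).
  apply (fin_cmp _ _ _ _ _ _ HX287 HY50 HZ50); [lra|lra|lra|lra]. 
Qed.
Lemma num4 : (1886/2511) ^ 287 * (31/56) ^ 50 < (3/28) ^ 50.
Proof.
  assert (HX1 : (1886/2511) ^ 1 <= (1886/2511)) by (rewrite pow_1; lra).
  assert (HX2 : (1886/2511) ^ 2 <= (564143971225928891769087381511 / 1000000000000000000000000000000)) by (eapply (chain_up _ 1 1); [lra|reflexivity|exact HX1|exact HX1|lra]).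
  assert (HX4 : (1886/2511) ^ 4 <= (318258420270561685383528205040 / 1000000000000000000000000000000)) by (eapply (chain_up _ 2 2); [lra|reflexivity|exact HX2|exact HX2|lra]).
  assert (HX8 : (1886/2511) ^ 8 <= (101288422073113469078601186721 / 1000000000000000000000000000000)) by (eapply (chain_up _ 4 4); [lra|reflexivity|exact HX4|exact HX4|lra]).
  assert (HX16 : (1886/2511) ^ 16 <= (102593444460611798251801957014 / 10000000000000000000000000000000)) by (eapply (chain_up _ 8 8); [lra|reflexivity|exact HX8|exact HX8|lra]).
  assert (HX17 : (1886/2511) ^ 17 <= (770574417573531865802064878250 / 100000000000000000000000000000000)) by (eapply (chain_up _ 16 1); [lra|reflexivity|exact HX16|exact HX1|lra]).
  assert (HX34 : (1886/2511) ^ 34 <= (593784933018787855571635562998 / 10000000000000000000000000000000000)) by (eapply (chain_up _ 17 17); [lra|reflexivity|exact HX17|exact HX17|lra]).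
  assert (HX35 : (1886/2511) ^ 35 <= (445989001861184347115931768943 / 10000000000000000000000000000000000)) by (eapply (chain_up _ 34 1); [lra|reflexivity|exact HX34|exact HX1|lra]).
  assert (HX70 : (1886/2511) ^ 70 <= (198906189781135495035781761348 / 100000000000000000000000000000000000000)) by (eapply (chain_up _ 35 35); [lra|reflexivity|exact HX35|exact HX35|lra]).
  assert (HX71 : (1886/2511) ^ 71 <= (149397480656002207740933652690 / 100000000000000000000000000000000000000)) by (eapply (chain_up _ 70 1); [lra|reflexivity|exact HX70|exact HX1|lra]).
  assert (HX142 : (1886/2511) ^ 142 <= (223196072263605538522028576792 / 100000000000000000000000000000000000000000000000)) by (eapply (chain_up _ 71 71); [lra|reflexivity|exact HX71|exact HX71|lra]).
  assert (HX143 : (1886/2511) ^ 143 <= (167641494340565529929329309371 / 100000000000000000000000000000000000000000000000)) by (eapply (chain_up _ 142 1); [lra|reflexivity|exact HX142|exact HX1|lra]).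
  assert (HX286 : (1886/2511) ^ 286 <= (281036706247378646004938398580 / 100000000000000000000000000000000000000000000000000000000000000000)) by (eapply (chain_up _ 143 143); [lra|reflexivity|exact HX143|exact HX143|lra]).
  assert (HX287 : (1886/2511) ^ 287 <= (211085315803487107274119402518 / 100000000000000000000000000000000000000000000000000000000000000000)) by (eapply (chain_up _ 286 1); [lra|reflexivity|exact HX286|exact HX1|lra]).
  assert (HY1 : (31/56) ^ 1 <= (31/56)) by (rewrite pow_1; lra).
  assert (HY2 : (31/56) ^ 2 <= (306441326530612244897959183674 / 1000000000000000000000000000000)) by (eapply (chain_up _ 1 1); [lra|reflexivity|exact HY1|exact HY1|lra]).
  assert (HY3 : (31/56) ^ 3 <= (169637162900874635568513119534 / 1000000000000000000000000000000)) by (eapply (chain_up _ 2 1); [lra|reflexivity|exact HY2|exact HY1|lra]).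
  assert (HY6 : (31/56) ^ 6 <= (287767670370578778028287533258 / 10000000000000000000000000000000)) by (eapply (chain_up _ 3 3); [lra|reflexivity|exact HY3|exact HY3|lra]).
  assert (HY12 : (31/56) ^ 12 <= (828102321105100831466236257964 / 1000000000000000000000000000000000)) by (eapply (chain_up _ 6 6); [lra|reflexivity|exact HY6|exact HY6|lra]).
  assert (HY24 : (31/56) ^ 24 <= (685753454219655525963486341484 / 1000000000000000000000000000000000000)) by (eapply (chain_up _ 12 12); [lra|reflexivity|exact HY12|exact HY12|lra]).
  assert (HY25 : (31/56) ^ 25 <= (379613519300166451872644224751 / 1000000000000000000000000000000000000)) by (eapply (chain_up _ 24 1); [lra|reflexivity|exact HY24|exact HY1|lra]).
  assert (HY50 : (31/56) ^ 50 <= (144106424035457847252337126816 / 1000000000000000000000000000000000000000000)) by (eapply (chain_up _ 25 25); [lra|reflexivity|exact HY25|exact HY25|lra]).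
  assert (HZ1 : (3/28) <= (3/28) ^ 1) by (rewrite pow_1; lra).
  assert (HZ2 : (114795918367346938775510204081 / 10000000000000000000000000000000) <= (3/28) ^ 2) by (eapply (chain_lo _ 1 1); [reflexivity|exact HZ1|exact HZ1|lra|lra|lra]).
  assert (HZ3 : (122995626822157434402332361515 / 100000000000000000000000000000000) <= (3/28) ^ 3) by (eapply (chain_lo _ 2 1); [reflexivity|exact HZ2|exact HZ1|lra|lra|lra]).
  assert (HZ6 : (151279242173754133056804562722 / 100000000000000000000000000000000000) <= (3/28) ^ 6) by (eapply (chain_lo _ 3 3); [reflexivity|exact HZ3|exact HZ3|lra|lra|lra]).
  assert (HZ12 : (228854091126653511165915731357 / 100000000000000000000000000000000000000000) <= (3/28) ^ 12) by (eapply (chain_lo _ 6 6); [reflexivity|exact HZ6|exact HZ6|lra|lra|lra]).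
  assert (HZ24 : (523741950254066293557091016552 / 100000000000000000000000000000000000000000000000000000) <= (3/28) ^ 24) by (eapply (chain_lo _ 12 12); [reflexivity|exact HZ12|exact HZ12|lra|lra|lra]).
  assert (HZ25 : (561152089557928171668311803448 / 1000000000000000000000000000000000000000000000000000000) <= (3/28) ^ 25) by (eapply (chain_lo _ 24 1); [reflexivity|exact HZ24|exact HZ1|lra|lra|lra]).
  assert (HZ50 : (314891667615229039398531411957 / 1000000000000000000000000000000000000000000000000000000000000000000000000000000) <= (3/28) ^ 50) by (eapply (chain_lo _ 25 25); [reflexivity|exact HZ25|exact HZ25|lra|lra|lra]).
  apply (fin_cmp _ _ _ _ _ _ HX287 HY50 HZ50); [lra|lra|lra|lra]. 
Qed.
Lemma num5 : (31/56) ^ 150 * (144366/175616) ^ 524 < (2511/3136) ^ 861.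
Proof.
  assert (HX1 : (31/56) ^ 1 <= (31/56)) by (rewrite pow_1; lra).
  assert (HX2 : (31/56) ^ 2 <= (306441326530612244897959183674 / 1000000000000000000000000000000)) by (eapply (chain_up _ 1 1); [lra|reflexivity|exact HX1|exact HX1|lra]).
  assert (HX4 : (31/56) ^ 4 <= (939062866058413161182840483136 / 10000000000000000000000000000000)) by (eapply (chain_up _ 2 2); [lra|reflexivity|exact HX2|exact HX2|lra]).
  assert (HX8 : (31/56) ^ 8 <= (881839066409841217108368365629 / 100000000000000000000000000000000)) by (eapply (chain_up _ 4 4); [lra|reflexivity|exact HX4|exact HX4|lra]).
  assert (HX9 : (31/56) ^ 9 <= (488160911762590673756418202402 / 100000000000000000000000000000000)) by (eapply (chain_up _ 8 1); [lra|reflexivity|exact HX8|exact HX1|lra]).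
  assert (HX18 : (31/56) ^ 18 <= (238301075772883837623618339264 / 10000000000000000000000000000000000)) by (eapply (chain_up _ 9 9); [lra|reflexivity|exact HX9|exact HX9|lra]).
  assert (HX36 : (31/56) ^ 36 <= (567874027145137243090168177325 / 1000000000000000000000000000000000000000)) by (eapply (chain_up _ 18 18); [lra|reflexivity|exact HX18|exact HX18|lra]).
  assert (HX37 : (31/56) ^ 37 <= (314358836455343830996343098163 / 1000000000000000000000000000000000000000)) by (eapply (chain_up _ 36 1); [lra|reflexivity|exact HX36|exact HX1|lra]).
  assert (HX74 : (31/56) ^ 74 <= (988214780575576095909202776168 / 10000000000000000000000000000000000000000000000000)) by (eapply (chain_up _ 37 37); [lra|reflexivity|exact HX37|exact HX37|lra]).
  assert (HX75 : (31/56) ^ 75 <= (547047467818622481664022965379 / 10000000000000000000000000000000000000000000000000)) by (eapply (chain_up _ 74 1); [lra|reflexivity|exact HX74|exact HX1|lra]).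
  assert (HX150 : (31/56) ^ 150 <= (299260932046766799717258183967 / 100000000000000000000000000000000000000000000000000000000000000000000)) by (eapply (chain_up _ 75 75); [lra|reflexivity|exact HX75|exact HX75|lra]).
  assert (HY1 : (144366/175616) ^ 1 <= (144366/175616)) by (rewrite pow_1; lra).
  assert (HY2 : (144366/175616) ^ 2 <= (675774321166877016060485001998 / 1000000000000000000000000000000)) by (eapply (chain_up _ 1 1); [lra|reflexivity|exact HY1|exact HY1|lra]).
  assert (HY4 : (144366/175616) ^ 4 <= (456670933148553445465408632802 / 1000000000000000000000000000000)) by (eapply (chain_up _ 2 2); [lra|reflexivity|exact HY2|exact HY2|lra]).
  assert (HY8 : (144366/175616) ^ 8 <= (208548341182770570104173685296 / 1000000000000000000000000000000)) by (eapply (chain_up _ 4 4); [lra|reflexivity|exact HY4|exact HY4|lra]).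
  assert (HY16 : (144366/175616) ^ 16 <= (434924106100852793911043197849 / 10000000000000000000000000000000)) by (eapply (chain_up _ 8 8); [lra|reflexivity|exact HY8|exact HY8|lra]).
  assert (HY32 : (144366/175616) ^ 32 <= (189158978067625858468896698744 / 100000000000000000000000000000000)) by (eapply (chain_up _ 16 16); [lra|reflexivity|exact HY16|exact HY16|lra]).
  assert (HY64 : (144366/175616) ^ 64 <= (357811189835885605532715453777 / 100000000000000000000000000000000000)) by (eapply (chain_up _ 32 32); [lra|reflexivity|exact HY32|exact HY32|lra]).
  assert (HY65 : (144366/175616) ^ 65 <= (294140455492936072614887021684 / 100000000000000000000000000000000000)) by (eapply (chain_up _ 64 1); [lra|reflexivity|exact HY64|exact HY1|lra]).
  assert (HY130 : (144366/175616) ^ 130 <= (865186075575919066126977883485 / 100000000000000000000000000000000000000000)) by (eapply (chain_up _ 65 65); [lra|reflexivity|exact HY65|exact HY65|lra]).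
  assert (HY131 : (144366/175616) ^ 131 <= (711230485756383996335682905472 / 100000000000000000000000000000000000000000)) by (eapply (chain_up _ 130 1); [lra|reflexivity|exact HY130|exact HY1|lra]).
  assert (HY262 : (144366/175616) ^ 262 <= (505848803869261938692248701243 / 10000000000000000000000000000000000000000000000000000)) by (eapply (chain_up _ 131 131); [lra|reflexivity|exact HY131|exact HY131|lra]).
  assert (HY524 : (144366/175616) ^ 524 <= (255883012375963032117483099864 / 100000000000000000000000000000000000000000000000000000000000000000000000000)) by (eapply (chain_up _ 262 262); [lra|reflexivity|exact HY262|exact HY262|lra]).
  assert (HZ1 : (2511/3136) <= (2511/3136) ^ 1) by (rewrite pow_1; lra).
  assert (HZ2 : (641122941124791753436068304872 / 1000000000000000000000000000000) <= (2511/3136) ^ 2) by (eapply (chain_lo _ 1 1); [reflexivity|exact HZ1|exact HZ1|lra|lra|lra]).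
  assert (HZ3 : (513348120269244927575882497938 / 1000000000000000000000000000000) <= (2511/3136) ^ 3) by (eapply (chain_lo _ 2 1); [reflexivity|exact HZ2|exact HZ1|lra|lra|lra]).
  assert (HZ6 : (263526292583967154853723706340 / 1000000000000000000000000000000) <= (2511/3136) ^ 6) by (eapply (chain_lo _ 3 3); [reflexivity|exact HZ3|exact HZ3|lra|lra|lra]).
  assert (HZ12 : (694461068830506622778008593965 / 10000000000000000000000000000000) <= (2511/3136) ^ 12) by (eapply (chain_lo _ 6 6); [reflexivity|exact HZ6|exact HZ6|lra|lra|lra]).
  assert (HZ13 : (556056040763202209756243488343 / 10000000000000000000000000000000) <= (2511/3136) ^ 13) by (eapply (chain_lo _ 12 1); [reflexivity|exact HZ12|exact HZ1|lra|lra|lra]).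
  assert (HZ26 : (309198320469247997535089851784 / 100000000000000000000000000000000) <= (2511/3136) ^ 26) by (eapply (chain_lo _ 13 13); [reflexivity|exact HZ13|exact HZ13|lra|lra|lra]).
  assert (HZ52 : (956036013810037852226215296320 / 100000000000000000000000000000000000) <= (2511/3136) ^ 52) by (eapply (chain_lo _ 26 26); [reflexivity|exact HZ26|exact HZ26|lra|lra|lra]).
  assert (HZ53 : (765499499578126609355875831970 / 100000000000000000000000000000000000) <= (2511/3136) ^ 53) by (eapply (chain_lo _ 52 1); [reflexivity|exact HZ52|exact HZ1|lra|lra|lra]).
  assert (HZ106 : (585989483854362260975213700603 / 10000000000000000000000000000000000000000) <= (2511/3136) ^ 106) by (eapply (chain_lo _ 53 53); [reflexivity|exact HZ53|exact HZ53|lra|lra|lra]).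
  assert (HZ107 : (469202676644867231284681633359 / 10000000000000000000000000000000000000000) <= (2511/3136) ^ 107) by (eapply (chain_lo _ 106 1); [reflexivity|exact HZ106|exact HZ1|lra|lra|lra]).
  assert (HZ214 : (220151151770707837582820826344 / 100000000000000000000000000000000000000000000000000) <= (2511/3136) ^ 214) by (eapply (chain_lo _ 107 107); [reflexivity|exact HZ107|exact HZ107|lra|lra|lra]).
  assert (HZ215 : (176275364188854394187009915481 / 100000000000000000000000000000000000000000000000000) <= (2511/3136) ^ 215) by (eapply (chain_lo _ 214 1); [reflexivity|exact HZ214|exact HZ1|lra|lra|lra]).
  assert (HZ430 : (310730040199132501922952960497 / 100000000000000000000000000000000000000000000000000000000000000000000000) <= (2511/3136) ^ 430) by (eapply (chain_lo _ 215 215); [reflexivity|exact HZ215|exact HZ215|lra|lra|lra]).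
  assert (HZ860 : (965531578821545006152922539887 / 100000000000000000000000000000000000000000000000000000000000000000000000000000000000000000000000000000000000000000) <= (2511/3136) ^ 860) by (eapply (chain_lo _ 430 430); [reflexivity|exact HZ430|exact HZ430|lra|lra|lra]).
  assert (HZ861 : (773102613016868466342470821956 / 100000000000000000000000000000000000000000000000000000000000000000000000000000000000000000000000000000000000000000) <= (2511/3136) ^ 861) by (eapply (chain_lo _ 860 1); [reflexivity|exact HZ860|exact HZ1|lra|lra|lra]).
  apply (fin_cmp _ _ _ _ _ _ HX150 HY524 HZ861); [lra|lra|lra|lra]. 
Qed.

Lemma H_piece p q y : 3/8 <= p -> p <= y -> y <= q -> q <= 2/5 ->
  H y <= 287/50 * ln ((1 - 2 * p ^ 2) / (1 - p ^ 2)) - ln (1 - 2 * q) + ln (1 - y).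
Proof.
  intros H1 H2 H3 H4. unfold H.
  assert (0 < 1 - 2 * y ^ 2) by nra. assert (0 < 1 - y ^ 2) by nra.
  assert (0 < 1 - p ^ 2) by nra.
  assert (ln ((1 - 2 * y ^ 2) / (1 - y ^ 2)) <= ln ((1 - 2 * p ^ 2) / (1 - p ^ 2))).
  { apply ln_le'. apply Rdiv_lt_0_compat; assumption.
    apply (Rmult_le_reg_r ((1 - y ^ 2) * (1 - p ^ 2))). apply Rmult_lt_0_compat; assumption.
    replace ((1 - 2 * y ^ 2) / (1 - y ^ 2) * ((1 - y ^ 2) * (1 - p ^ 2)))
      with ((1 - 2 * y ^ 2) * (1 - p ^ 2)) by (field; lra).
    replace ((1 - 2 * p ^ 2) / (1 - p ^ 2) * ((1 - y ^ 2) * (1 - p ^ 2)))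
      with ((1 - 2 * p ^ 2) * (1 - y ^ 2)) by (field; lra).
    nra. }
  assert (ln (1 - 2 * q) <= ln (1 - 2 * y)) by (apply ln_le'; lra).
  lra.
Qed.

Theorem lemma4p5 :
  forall x : R, 3 / 8 <= x <= 1 / 2 -> Psi d0 x = x -> Phi3 d0 x > 0.
Proof.
  intros x [Hx1 Hx2] Hfix.
  unfold Psi, dotPsi, hatPsi in Hfix.
  set (v := (1 - 2 * x ^ 2) / (1 - x ^ 2)) in *.
  set (w := Rpower v (d0 - 1)) in *.
  assert (Hv : 0 < v) by (unfold v; apply Rdiv_lt_0_compat; nra).
  assert (Hw : 0 < w) by (unfold w, Rpower; apply exp_pos).
  destruct (Req_dec (2 - w) 0) as [E|E].
  { rewrite E in Hfix. unfold Rdiv in Hfix. rewrite Rinv_0, Rmult_0_r in Hfix. lra. }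
  assert (E2 : 1 - w = x * (2 - w)) by (rewrite <- Hfix; field; exact E).
  assert (E3 : 1 - 2 * x = w * (1 - x)) by lra.
  assert (Hlt : x < 1/2) by nra.
  assert (Hl : ln (1 - 2 * x) = ln w + ln (1 - x)) by (rewrite E3; apply ln_mult; lra).
  assert (Hl2 : ln w = 287 / 50 * ln v).
  { unfold w. rewrite ln_Rpower. f_equal. unfold d0. field. }
  assert (H0 : H x = 0) by (unfold H; fold v; lra).
  assert (Ha : H (25/56) < 0).
  { unfold H.  
    replace ((1 - 2 * (25 / 56) ^ 2) / (1 - (25 / 56) ^ 2)) with (1886/2511) by field.
    replace (1 - 2 * (25/56)) with (3/28) by field.
    replace (1 - 25/56) with (31/56) by field.
    apply Hneg; [lra|lra|lra|apply num4]. }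
  assert (Hgt : 25/56 < x).
  { destruct (Rlt_or_le (25/56) x) as [G|G]; [exact G|exfalso].
    destruct (Rle_lt_dec x (77/200)) as [C1|C1].
    { pose proof (H_piece (3/8) (77/200) x ltac:(lra) ltac:(lra) ltac:(lra) ltac:(lra)) as P.
      assert (287/50 * ln ((1 - 2 * (3/8) ^ 2) / (1 - (3/8) ^ 2)) - ln (1 - 2 * (77/200))
                + ln (1 - 3/8) < 0).
      { 
        replace ((1 - 2 * (3/8) ^ 2) / (1 - (3/8) ^ 2)) with (46/55) by field.
        replace (1 - 2 * (77/200)) with (23/100) by field.
        replace (1 - 3/8) with (5/8) by field. apply Hneg; [lra|lra|lra|apply num1]. }
      assert (ln (1 - x) <= ln (1 - 3/8)) by (apply ln_le'; lra). lra. }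
    destruct (Rle_lt_dec x (79/200)) as [C2|C2].
    { pose proof (H_piece (77/200) (79/200) x ltac:(lra) ltac:(lra) ltac:(lra) ltac:(lra)) as P.
      assert (287/50 * ln ((1 - 2 * (77/200) ^ 2) / (1 - (77/200) ^ 2)) - ln (1 - 2 * (79/200))
                + ln (1 - 77/200) < 0).
      { 
        replace ((1 - 2 * (77/200) ^ 2) / (1 - (77/200) ^ 2)) with (28142/34071) by field.
        replace (1 - 2 * (79/200)) with (21/100) by field.
        replace (1 - 77/200) with (123/200) by field. apply Hneg; [lra|lra|lra|apply num2]. }
      assert (ln (1 - x) <= ln (1 - 77/200)) by (apply ln_le'; lra). lra. }
    destruct (Rle_lt_dec x (2/5)) as [C3|C3].
    { pose proof (H_piece (79/200) (2/5) x ltac:(lra) ltac:(lra) ltac:(lra) ltac:(lra)) as P.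
      assert (287/50 * ln ((1 - 2 * (79/200) ^ 2) / (1 - (79/200) ^ 2)) - ln (1 - 2 * (2/5))
                + ln (1 - 79/200) < 0).
      { 
        replace ((1 - 2 * (79/200) ^ 2) / (1 - (79/200) ^ 2)) with (27518/33759) by field.
        replace (1 - 2 * (2/5)) with (1/5) by field.
        replace (1 - 79/200) with (121/200) by field. apply Hneg; [lra|lra|lra|apply num3]. }
      assert (ln (1 - x) <= ln (1 - 79/200)) by (apply ln_le'; lra). lra. }
    destruct (Rle_lt_or_eq_dec _ _ G) as [G'|G'].
    - pose proof (H_incr x (25/56) ltac:(lra) G' ltac:(lra)). lra.
    - rewrite G' in H0. lra. }
  assert (Pa : Ph (25/56) > 0).
  { unfold Ph. 
    replace (1 - 25/56) with (31/56) by field.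
    replace (1 - 2 * (25/56) ^ 3) with (144366/175616) by field.
    replace (1 - (25/56) ^ 2) with (2511/3136) by field.
    apply Ppos; [lra|lra|lra|apply num5]. }
  pose proof (Ph_incr (25/56) x ltac:(lra) Hgt Hlt).
  replace (Phi3 d0 x) with (Ph x). lra.
  unfold Phi3, Ph, d0. f_equal. f_equal. f_equal. field.
  f_equal. field.
Qed.
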